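(* Let $(X,<)$ be a linearly ordered set. (1) For all $u,v\in\beta X$: $$u\trianglelefteq v\iff \widetilde{\min}(u,v)=u\vee\widetilde{\min}(v,u)=u\iff\widetilde{\min}(u,v)=u\vee\widetilde{\min}(u,v)\ne\widetilde{\min}(v,u)$$ $$\iff\widetilde{\max}(u,v)=v\vee\widetilde{\max}(v,u)=v\iff\widetilde{\max}(u,v)=v\vee\widetilde{\max}(u,v)\ne\widetilde{\max}(v,u),$$ and $$u\equiv v\iff\widetilde{\min}(u,v)\ne\widetilde{\min}(v,u)\vee u=v\iff\widetilde{\max}(u,v)\ne\widetilde{\max}(v,u)\vee u=v.$$ (2) The equivalence $\equiv$ is a congruence of the skew lattice $(\beta X,\widetilde{\max},\widetilde{\min})$ and coincides with the relation $D$. (3) The quotient $\beta X/\!\equiv$ with the operations induced by $\widetilde{\min}$ and $\widetilde{\max}$ is isomorphic, via $[u]\mapsto\mathrm{supp}(u)$, to the lattice $(s(X),\min,\max)$. (4) For each $u\in\beta X$, the $\equiv$-class of $u$ is $\{u\}$ if $u$ is principal; if $u$ is non-principal with $I_u\in u$, it is a left-zero band for $\widetilde{\min}$ and a right-zero band for $\widetilde{\max}$; if $u$ is non-principal with $J_u\in u$, it is a right-zero band for $\widetilde{\min}$ and a left-zero band for $\widetilde{\max}$.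
   Context: $\beta X$ is the set of ultrafilters over $X$. For a binary relation $R$ on $X$, $u\,\tilde R\,v\iff\{x:\{y:x\,R\,y\}\in v\}\in u$; for a binary operation $F$ (here $\min,\max$), $S\in\tilde F(u,v)\iff\{x:\{y:F(x,y)\in S\}\in v\}\in u$. Define $u\trianglelefteq v\iff(u\,\tilde\le\,v\vee v\,\tilde\ge\,u)$ and $u\equiv v\iff(u\trianglelefteq v\wedge v\trianglelefteq u)$. $D$ is the relation on $\beta X$ given by $u\,D\,v\iff\widetilde{\min}(\widetilde{\min}(u,v),u)=u\wedge\widetilde{\min}(\widetilde{\min}(v,u),v)=v$. A set $B$ with binary operation $\cdot$ is a left-zero band if $xy=x$ for all $x,y\in B$, a right-zero band if $xy=y$ for all $x,y\in B$. $I_u=\bigcap\{I\in u:I\text{ initial segment}\}$, $J_u=\bigcap\{J\in u:J\text{ final segment}\}$. Supports: $\mathrm{supp}(\tilde x)=\{x\}$; for non-principal $u$ (exactly one of $I_u\in u$, $J_u\in u$ holds), $\mathrm{supp}(u)$ is $I_u$ regarded as a left half-cut if $I_u\in u$ and $J_u$ regarded as a right half-cut if $J_u\in u$; supports equal iff same kind and equal as sets. $s(X)$ is the set of all supports of ultrafilters over $X$, linearly ordered by: $\{x\}<\{y\}$ iff $x<y$; $\{x\}<I$ iff $x\in I$, $I<\{x\}$ iff $x\notin I$; $\{x\}<J$ iff $x\notin J$, $J<\{x\}$ iff $x\in J$; $I<I'$ iff $I\subsetneq I'$; $J<J'$ iff $J\supsetneq J'$; $I<J$ iff $I\cap J=\emptyset$,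 $J<I$ iff $I\cap J\neq\emptyset$; $\min,\max$ on $s(X)$ are taken with respect to this order. *)

(* Defs.v *)
From Stdlib Require Import Classical ClassicalEpsilon FunctionalExtensionality PropExtensionality.

Definition strict_linear_order (X : Type) (lt : X -> X -> Prop) : Prop :=
  (forall x, ~ lt x x) /\
  (forall x y z, lt x y -> lt y z -> lt x z) /\
  (forall x y, lt x y \/ x = y \/ lt y x).

Definition le {X : Type} (lt : X -> X -> Prop) (x y : X) : Prop := lt x y \/ x = y.

Record ultra (X : Type) := Ultra {
  umem : (X -> Prop) -> Prop;
  u_full : umem (fun _ => True);
  u_nempty : ~ umem (fun _ => False);
  u_inter : forall A B, umem A -> umem B -> umem (fun x => A x /\ B x);
  u_up : forall A B : X -> Prop, (forall x, A x -> B x) -> umem A -> umem B;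
  u_ult : forall A, umem A \/ umem (fun x => ~ A x) }.

Arguments umem {X} u A.
Arguments u_full {X} u.
Arguments u_nempty {X} u.
Arguments u_inter {X} u A B.
Arguments u_up {X} u A B.
Arguments u_ult {X} u A.

Definition principal_uf {X : Type} (x : X) : ultra X.
Proof.
  refine (@Ultra X (fun A => A x) _ _ _ _ _).
  - exact I.
  - exact (fun H => H).
  - exact (fun A B a b => conj a b).
  - exact (fun A B H a => H x a).
  - exact (fun A => classic (A x)).
Defined.

Definition is_principal {X : Type} (u : ultra X) : Prop :=
  exists x : X, u = principal_uf x.

Definition ext_op {X : Type} (F : X -> X -> X) (u v : ultra X) : ultra X.
Proof.
  refine (@Ultra X (fun S => umem u (fun x => umem v (fun y => S (F x y)))) _ _ _ _ _).
  - apply (u_up u (fun _ => True)); [intros x _; apply (u_full v) | apply (u_full u)].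
  - intro H. apply (u_nempty u).
    apply (u_up u (fun x => umem v (fun y => False)) (fun _ => False));
      [intros x Hx; exact (u_nempty v Hx) | exact H].
  - intros A B HA HB.
    apply (u_up u (fun x => umem v (fun y => A (F x y)) /\ umem v (fun y => B (F x y)))).
    + intros x [a b]. exact (u_inter v _ _ a b).
    + apply (u_inter u); assumption.
  - intros A B H HA.
    apply (u_up u (fun x => umem v (fun y => A (F x y)))); [|exact HA].
    intros x Hx. exact (u_up v _ _ (fun y => H (F x y)) Hx).
  - intros A.
    destruct (u_ult u (fun x => umem v (fun y => A (F x y)))) as [H|H];
      [left; exact H | right].
    apply (u_up u _ _) with (2 := H). intros x Hx.
    destruct (u_ult v (fun y => A (F x y))) as [H'|H']; [contradiction | exact H'].
Defined.

Definition ext_rel {X : Type} (R : X -> X -> Prop) (u v : ultra X) : Prop :=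
  umem u (fun x => umem v (fun y => R x y)).

Definition xmin {X : Type} (lt : X -> X -> Prop) (x y : X) : X :=
  if excluded_middle_informative (le lt x y) then x else y.
Definition xmax {X : Type} (lt : X -> X -> Prop) (x y : X) : X :=
  if excluded_middle_informative (le lt x y) then y else x.

Definition tmin {X : Type} (lt : X -> X -> Prop) (u v : ultra X) : ultra X :=
  ext_op (xmin lt) u v.
Definition tmax {X : Type} (lt : X -> X -> Prop) (u v : ultra X) : ultra X :=
  ext_op (xmax lt) u v.

Definition tle {X : Type} (lt : X -> X -> Prop) (u v : ultra X) : Prop :=
  ext_rel (le lt) u v \/ ext_rel (fun x y => le lt y x) v u.

Definition tequiv {X : Type} (lt : X -> X -> Prop) (u v : ultra X) : Prop :=
  tle lt u v /\ tle lt v u.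

Definition relD {X : Type} (lt : X -> X -> Prop) (u v : ultra X) : Prop :=
  tmin lt (tmin lt u v) u = u /\ tmin lt (tmin lt v u) v = v.

Definition initial_seg {X : Type} (lt : X -> X -> Prop) (I : X -> Prop) : Prop :=
  forall x y, I y -> le lt x y -> I x.
Definition final_seg {X : Type} (lt : X -> X -> Prop) (J : X -> Prop) : Prop :=
  forall x y, J y -> le lt y x -> J x.

Definition Iu {X : Type} (lt : X -> X -> Prop) (u : ultra X) : X -> Prop :=
  fun x => forall I, initial_seg lt I -> umem u I -> I x.
Definition Ju {X : Type} (lt : X -> X -> Prop) (u : ultra X) : X -> Prop :=
  fun x => forall J, final_seg lt J -> umem u J -> J x.

(* supports: a point {x}, a left half-cut I, or a right half-cut J;
   two supports are equal iff same kind and equal (as sets) *)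
Inductive supp_t (X : Type) :=
  | SPt (x : X)
  | SLeft (I : X -> Prop)
  | SRight (J : X -> Prop).
Arguments SPt {X} x.
Arguments SLeft {X} I.
Arguments SRight {X} J.

Definition supp {X : Type} (lt : X -> X -> Prop) (u : ultra X) : supp_t X :=
  match excluded_middle_informative (is_principal u) with
  | left H => SPt (proj1_sig (constructive_indefinite_description _ H))
  | right _ =>
      if excluded_middle_informative (umem u (Iu lt u))
      then SLeft (Iu lt u) else SRight (Ju lt u)
  end.

Definition in_sX {X : Type} (lt : X -> X -> Prop) (s : supp_t X) : Prop :=
  exists u : ultra X, supp lt u = s.

Definition supp_lt {X : Type} (lt : X -> X -> Prop) (s t : supp_t X) : Prop :=
  match s, t with
  | SPt x, SPt y => lt x y
  | SPt x, SLeft K => K x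
  | SLeft K, SPt x => ~ K x
  | SPt x, SRight L => ~ L x
  | SRight L, SPt x => L x
  | SLeft K, SLeft K' => (forall x, K x -> K' x) /\ exists x, K' x /\ ~ K x
  | SRight L, SRight L' => (forall x, L' x -> L x) /\ exists x, L x /\ ~ L' x
  | SLeft K, SRight L => forall x, ~ (K x /\ L x)
  | SRight L, SLeft K => exists x, K x /\ L x
  end.

Definition smin {X : Type} (lt : X -> X -> Prop) (s t : supp_t X) : supp_t X :=
  if excluded_middle_informative (supp_lt lt s t) then s else t.
Definition smax {X : Type} (lt : X -> X -> Prop) (s t : supp_t X) : supp_t X :=
  if excluded_middle_informative (supp_lt lt s t) then t else s.

(* Main.v *)
Require Import Defs.
From Stdlib Require Import Classical ClassicalEpsilon FunctionalExtensionality PropExtensionality ProofIrrelevance.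

Lemma uf_eq {X} (u v : ultra X) : (forall A, umem u A <-> umem v A) -> u = v.
Proof.
  destruct u as [m1 a1 b1 c1 d1 e1], v as [m2 a2 b2 c2 d2 e2]; simpl; intro H.
  assert (m1 = m2) by (apply functional_extensionality; intro A; apply propositional_extensionality; apply H).
  subst m2. f_equal; apply proof_irrelevance.
Qed.

Lemma u_ne {X} (u : ultra X) A : umem u A -> exists x, A x.
Proof. intro H. apply NNPP; intro N. apply (u_nempty u). apply (u_up u A); [|exact H].
  intros x Hx; apply N; exists x; exact Hx. Qed.

Lemma u_int_ne {X} (u : ultra X) A B : umem u A -> umem u B -> exists x, A x /\ B x.
Proof. intros; apply (u_ne u); apply u_inter; auto. Qed.

Lemma u_not {X} (u : ultra X) A : ~ umem u A -> umem u (fun x => ~ A x).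
Proof. intro H; destruct (u_ult u A); tauto. Qed.

Lemma u_not2 {X} (u : ultra X) A : umem u A -> ~ umem u (fun x => ~ A x).
Proof. intros H1 H2. destruct (u_int_ne u _ _ H1 H2) as [x [a b]]; tauto. Qed.

Section S.
Context {X : Type} (lt : X -> X -> Prop) (Hl : strict_linear_order X lt).

Lemma irr x : ~ lt x x. Proof. destruct Hl as [a _]; apply a. Qed.
Lemma trn x y z : lt x y -> lt y z -> lt x z. Proof. destruct Hl as [_ [a _]]; apply a. Qed.
Lemma tot x y : lt x y \/ x = y \/ lt y x. Proof. destruct Hl as [_ [_ a]]; apply a. Qed.

Lemma le_not_lt x y : le lt x y -> ~ lt y x.
Proof. intros [H|H] H2; [apply (irr x); eapply trn; eauto | subst; eapply irr; eauto]. Qed.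
Lemma not_le_lt x y : ~ le lt x y -> lt y x.
Proof. intro H. destruct (tot x y) as [a|[a|a]]; auto; exfalso; apply H. left; auto. right; auto. Qed.
Lemma lt_le x y : lt x y -> le lt x y. Proof. intro; left; auto. Qed.
Lemma le_refl x : le lt x x. Proof. right; auto. Qed.

Lemma init_lt_not I x y : initial_seg lt I -> I y -> ~ I x -> lt y x.
Proof. intros HI Hy Hx. apply not_le_lt. intro H. apply Hx. apply (HI x y); auto. Qed.

Lemma init_le x : initial_seg lt (fun y => le lt y x).
Proof. intros a b Hb Hab. destruct Hab as [H|H]; [|subst; auto]. left.
  destruct Hb as [H2|H2]; [eapply trn; eauto | subst; auto]. Qed.
Lemma init_lt x : initial_seg lt (fun y => lt y x).
Proof. intros a b Hb Hab. destruct Hab as [H|H]; [eapply trn; eauto|subst; auto]. Qed.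
Lemma final_lt x : final_seg lt (fun y => lt x y).
Proof. intros a b Hb Hab. destruct Hab as [H|H]; [eapply trn; eauto|subst; auto]. Qed.
Lemma compl_init J : final_seg lt J -> initial_seg lt (fun x => ~ J x).
Proof. intros HJ a b Hb Hab Ja. apply Hb. eapply HJ; eauto. Qed.
Lemma compl_final I : initial_seg lt I -> final_seg lt (fun x => ~ I x).
Proof. intros HI a b Hb Hab Ia. apply Hb. eapply HI; eauto. Qed.
Lemma Iu_init u : initial_seg lt (Iu lt u).
Proof. intros a b Hb Hab I HI Hu. apply (HI a b); [apply Hb; auto | exact Hab]. Qed.
Lemma Ju_final u : final_seg lt (Ju lt u).
Proof. intros a b Hb Hab I HI Hu. apply (HI a b); [apply Hb; auto | exact Hab]. Qed.

Lemma xmin_l x y : le lt x y -> xmin lt x y = x.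
Proof. unfold xmin; destruct (excluded_middle_informative _); auto; contradiction. Qed.
Lemma xmin_r x y : lt y x -> xmin lt x y = y.
Proof. intro H; unfold xmin; destruct (excluded_middle_informative _) as [a|a]; auto.
  exfalso; eapply le_not_lt; eauto. Qed.
Lemma xmax_r x y : le lt x y -> xmax lt x y = y.
Proof. unfold xmax; destruct (excluded_middle_informative _); auto; contradiction. Qed.
Lemma xmax_l x y : lt y x -> xmax lt x y = x.
Proof. intro H; unfold xmax; destruct (excluded_middle_informative _) as [a|a]; auto.
  exfalso; eapply le_not_lt; eauto. Qed.
Lemma xmin_le x y : le lt (xmin lt x y) x /\ le lt (xmin lt x y) y.
Proof. destruct (classic (le lt x y)) as [H|H].
  - rewrite xmin_l; auto using le_refl.
  - pose proof (not_le_lt _ _ H). rewrite xmin_r; auto using le_refl, lt_le. Qed.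
Lemma xmax_le x y : le lt x (xmax lt x y) /\ le lt y (xmax lt x y).
Proof. destruct (classic (le lt x y)) as [H|H].
  - rewrite xmax_r; auto using le_refl.
  - pose proof (not_le_lt _ _ H). rewrite xmax_l; auto using le_refl, lt_le. Qed.
Lemma xmin_cases x y : xmin lt x y = x \/ xmin lt x y = y.
Proof. unfold xmin; destruct (excluded_middle_informative _); auto. Qed.
Lemma xmax_cases x y : xmax lt x y = x \/ xmax lt x y = y.
Proof. unfold xmax; destruct (excluded_middle_informative _); auto. Qed.

Lemma tmin_init (u v : ultra X) I : initial_seg lt I ->
  (umem (tmin lt u v) I <-> umem u I \/ umem v I).
Proof.
  intro HI; unfold tmin; simpl; split.
  - intro H; apply NNPP; intro N; apply not_or_and in N; destruct N as [N1 N2].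
    destruct (u_int_ne u _ _ H (u_not _ _ N1)) as [x [Hx Nx]].
    destruct (u_int_ne v _ _ Hx (u_not _ _ N2)) as [y [Hy Ny]].
    destruct (xmin_cases x y) as [E|E]; rewrite E in Hy; tauto.
  - intros [Hu|Hv].
    + apply (u_up u I); [|exact Hu]. intros x Hx.
      apply (u_up v (fun _ => True)); [|apply u_full]. intros y _.
      apply (HI _ x Hx); apply xmin_le.
    + apply (u_up u (fun _ => True)); [|apply u_full]. intros x _.
      apply (u_up v I); [|exact Hv]. intros y Hy.
      apply (HI _ y Hy); apply xmin_le.
Qed.

Lemma tmax_init (u v : ultra X) I : initial_seg lt I ->
  (umem (tmax lt u v) I <-> umem u I /\ umem v I).
Proof.
  intro HI; unfold tmax; simpl; split.
  - intro H; split.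
    + apply (u_up u _ _) with (2 := H). intros x Hx.
      destruct (u_ne _ _ Hx) as [y Hy]. apply (HI _ _ Hy); apply xmax_le.
    + destruct (u_ne _ _ H) as [x Hx]. apply (u_up v _ _) with (2 := Hx).
      intros y Hy. apply (HI _ _ Hy); apply xmax_le.
  - intros [Hu Hv]. apply (u_up u I); [|exact Hu]. intros x Hx.
    apply (u_up v I); [|exact Hv]. intros y Hy.
    destruct (xmax_cases x y) as [E|E]; rewrite E; auto.
Qed.

Definition lo (u v : ultra X) := forall I, initial_seg lt I -> umem v I -> umem u I.

Lemma notlo u v : ~ lo u v -> exists I, initial_seg lt I /\ umem v I /\ ~ umem u I.
Proof. unfold lo; intro N; apply NNPP; intro M; apply N; intros I HI Hv;
  apply NNPP; intro Hu; apply M; eauto. Qed.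

Lemma tle_lo u v : tle lt u v <-> lo u v.
Proof.
  unfold tle, ext_rel; split.
  - intros [H1|H2] I HI Hv.
    + apply NNPP; intro N.
      destruct (u_int_ne u _ _ H1 (u_not _ _ N)) as [x [Hx Nx]].
      destruct (u_int_ne v _ _ Hx Hv) as [y [Hxy Hy]].
      apply Nx; eapply HI; eauto.
    + destruct (u_int_ne v _ _ H2 Hv) as [y [Hy Iy]].
      apply (u_up u _ _) with (2 := Hy). intros z Hz; eapply HI; eauto.
  - intro L. apply NNPP; intro N. apply not_or_and in N; destruct N as [N1 N2].
    pose proof (u_not _ _ N1) as C. pose proof (u_not _ _ N2) as D.
    assert (DI : initial_seg lt (fun y => ~ umem u (fun x => le lt x y))).
    { intros a b Hb Hab Ha. apply Hb. apply (u_up u _ _) with (2 := Ha).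
      intros z Hz. destruct Hab as [Hab|Hab]; [|subst; auto].
      destruct Hz as [Hz|Hz]; left; [eapply trn; eauto|subst; auto]. }
    pose proof (L _ DI D) as Du.
    destruct (u_int_ne u _ _ C Du) as [x [Cx Dx]].
    apply Dx. apply (u_up u (fun y => lt y x)). intros; left; auto.
    apply L. apply init_lt. apply (u_up v _ _) with (2 := u_not _ _ Cx).
    intros y Hy. apply not_le_lt; auto.
Qed.

Lemma lo_refl u : lo u u. Proof. intros I _ H; auto. Qed.
Lemma lo_trans u v w : lo u v -> lo v w -> lo u w.
Proof. intros A B I HI H; apply A; auto. Qed.

Lemma ext_left F (u v : ultra X) A B : umem u A -> (forall x, A x -> umem v (B x)) ->
  (forall x y, A x -> B x y -> F x y = x) -> ext_op F u v = u.
Proof.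
  intros HA HB HF. apply uf_eq; intro S; simpl. split.
  - intro H. apply (u_up u (fun x => A x /\ umem v (fun y => S (F x y)))).
    + intros x [Ax Hx]. destruct (u_int_ne v _ _ Hx (HB x Ax)) as [y [Sy By]].
      rewrite (HF x y Ax By) in Sy; exact Sy.
    + apply u_inter; auto.
  - intro H. apply (u_up u (fun x => A x /\ S x)).
    + intros x [Ax Sx]. apply (u_up v (B x)); [intros y By; rewrite (HF x y Ax By); exact Sx | auto].
    + apply u_inter; auto.
Qed.

Lemma ext_right F (u v : ultra X) A B : umem u A -> (forall x, A x -> umem v (B x)) ->
  (forall x y, A x -> B x y -> F x y = y) -> ext_op F u v = v.
Proof.
  intros HA HB HF. apply uf_eq; intro S; simpl. split.
  - intro H. destruct (u_int_ne u _ _ H HA) as [x [Hx Ax]].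
    apply (u_up v (fun y => S (F x y) /\ B x y)).
    + intros y [Sy By]; rewrite (HF x y Ax By) in Sy; auto.
    + apply u_inter; auto.
  - intro H. apply (u_up u A); [|auto]. intros x Ax.
    apply (u_up v (fun y => S y /\ B x y)).
    + intros y [Sy By]; rewrite (HF x y Ax By); auto.
    + apply u_inter; auto.
Qed.

Lemma sep u v I : initial_seg lt I -> umem u I -> ~ umem v I ->
  tmin lt u v = u /\ tmin lt v u = u /\ tmax lt u v = v /\ tmax lt v u = v.
Proof.
  intros HI Hu Hv. pose proof (u_not _ _ Hv) as Nv.
  assert (K : forall x y, I x -> ~ I y -> lt x y) by (intros; eapply init_lt_not; eauto).
  unfold tmin, tmax; repeat split.
  - apply (ext_left _ u v I (fun _ y => ~ I y)); auto. intros; apply xmin_l, lt_le; auto.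
  - apply (ext_right _ v u (fun y => ~ I y) (fun _ => I)); auto. intros; apply xmin_r; auto.
  - apply (ext_right _ u v I (fun _ y => ~ I y)); auto. intros; apply xmax_r, lt_le; auto.
  - apply (ext_left _ v u (fun y => ~ I y) (fun _ => I)); auto. intros; apply xmax_l; auto.
Qed.

End S.

Section S2.
Context {X : Type} (lt : X -> X -> Prop) (Hl : strict_linear_order X lt).

Lemma principal_of (u : ultra X) x : umem u (fun y => y = x) -> u = principal_uf x.
Proof. intro H0. apply uf_eq; intro A; simpl; split.
  - intro H. destruct (u_int_ne u _ _ H0 H) as [y [E Ay]]; subst; auto.
  - intro H. apply (u_up u _ _) with (2 := H0). intros; subst; auto. Qed.

Lemma principal_inj (x y : X) : principal_uf x = principal_uf y -> x = y.
Proof. intro H. assert (A : umem (principal_uf y) (fun z => z = y)) by reflexivity.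
  rewrite <- H in A. exact A. Qed.

Lemma same_principal u v x : lo lt u v -> lo lt v u -> u = principal_uf x -> v = u.
Proof.
  intros L1 L2 E. subst u. apply principal_of.
  assert (A : umem v (fun y => le lt y x)) by (apply L2; [apply (init_le lt Hl) | apply le_refl]).
  assert (B : ~ umem v (fun y => lt y x)).
  { intro B. apply L1 in B; [| apply (init_lt lt Hl)]. apply (irr lt Hl x); exact B. }
  apply (u_up v (fun y => le lt y x /\ ~ lt y x)).
  - intros y [[a|a] b]; [contradiction|auto].
  - apply u_inter; auto. apply u_not; auto.
Qed.

Lemma nonprinc_Iu u x : ~ is_principal u -> Iu lt u x -> ~ umem u (fun y => le lt y x).
Proof.
  intros NP Hx H. apply NP. exists x. apply principal_of.
  assert (B : ~ umem u (fun y => lt y x)).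
  { intro B. apply (irr lt Hl x). apply (Hx (fun y => lt y x)); auto. apply (init_lt lt Hl). }
  apply (u_up u (fun y => le lt y x /\ ~ lt y x)).
  - intros y [[a|a] b]; [contradiction|auto].
  - apply u_inter; auto. apply u_not; auto.
Qed.

Lemma nonprinc_Ju u x : ~ is_principal u -> Ju lt u x -> ~ umem u (fun y => le lt x y).
Proof.
  intros NP Hx H. apply NP. exists x. apply principal_of.
  assert (B : ~ umem u (fun y => lt x y)).
  { intro B. apply (irr lt Hl x). apply (Hx (fun y => lt x y)); auto. apply (final_lt lt Hl). }
  apply (u_up u (fun y => le lt x y /\ ~ lt x y)).
  - intros y [[a|a] b]; [contradiction|auto].
  - apply u_inter; auto. apply u_not; auto.
Qed.

Lemma u_iff_not (u : ultra X) A : umem u A <-> ~ umem u (fun x => ~ A x).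
Proof. split; [apply u_not2|]. intro H; destruct (u_ult u A); tauto. Qed.

Lemma same_final u v J : lo lt u v -> lo lt v u -> final_seg lt J -> (umem u J <-> umem v J).
Proof.
  intros L1 L2 HJ. rewrite (u_iff_not u J), (u_iff_not v J).
  pose proof (compl_init lt J HJ) as HC. split; intros N H; apply N; [apply L1|apply L2]; auto.
Qed.

Lemma LR u : umem u (Iu lt u) \/ umem u (Ju lt u).
Proof.
  destruct (classic (umem u (Iu lt u))) as [H|H]; [left; auto|right].
  apply NNPP; intro N2.
  destruct (u_int_ne u _ _ (u_not _ _ H) (u_not _ _ N2)) as [x [Nx Mx]].
  unfold Iu in Nx; unfold Ju in Mx.
  apply not_all_ex_not in Nx; destruct Nx as [I NI].
  apply imply_to_and in NI; destruct NI as [HI NI]; apply imply_to_and in NI; destruct NI as [Iu' NIx].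
  apply not_all_ex_not in Mx; destruct Mx as [J NJ].
  apply imply_to_and in NJ; destruct NJ as [HJ NJ]; apply imply_to_and in NJ; destruct NJ as [Ju' NJx].
  destruct (u_int_ne u _ _ Iu' Ju') as [y [Iy Jy]].
  destruct (classic (le lt x y)) as [a|a].
  - apply NIx. eapply HI; eauto.
  - apply NJx. eapply HJ; eauto. left. apply (not_le_lt lt Hl); auto.
Qed.

Lemma class_left u v w : ~ is_principal u -> umem u (Iu lt u) ->
  lo lt v u -> lo lt u v -> lo lt w u -> lo lt u w ->
  tmin lt v w = v /\ tmax lt v w = w.
Proof.
  intros NP HI L1 L2 L3 L4.
  assert (Av : umem v (Iu lt u)) by (apply L1; auto; apply Iu_init).
  assert (B : forall x, Iu lt u x -> umem w (fun y => lt x y)).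
  { intros x Hx. pose proof (nonprinc_Iu u x NP Hx) as N.
    assert (N' : ~ umem w (fun y => le lt y x)) by (intro H; apply N; apply L4; auto; apply (init_le lt Hl)).
    apply (u_up w _ _) with (2 := u_not _ _ N'). intros y Hy; apply (not_le_lt lt Hl); auto. }
  unfold tmin, tmax; split.
  - apply (ext_left _ v w _ _ Av B). intros; apply (xmin_l lt), lt_le; auto.
  - apply (ext_right _ v w _ _ Av B). intros; apply (xmax_r lt), lt_le; auto.
Qed.

Lemma class_right u v w : ~ is_principal u -> umem u (Ju lt u) ->
  lo lt v u -> lo lt u v -> lo lt w u -> lo lt u w ->
  tmin lt v w = w /\ tmax lt v w = v.
Proof.
  intros NP HJ L1 L2 L3 L4.
  assert (Av : umem v (Ju lt u)) by (apply (same_final u v); auto; apply Ju_final).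
  assert (B : forall x, Ju lt u x -> umem w (fun y => lt y x)).
  { intros x Hx. pose proof (nonprinc_Ju u x NP Hx) as N.
    apply L3; [apply (init_lt lt Hl)|].
    apply (u_up u _ _) with (2 := u_not _ _ N). intros y Hy; apply (not_le_lt lt Hl); auto. }
  unfold tmin, tmax; split.
  - apply (ext_right _ v w _ _ Av B). intros; apply (xmin_r lt Hl); auto.
  - apply (ext_left _ v w _ _ Av B). intros; apply (xmax_l lt Hl); auto.
Qed.

Lemma tmin_pp x : tmin lt (principal_uf x) (principal_uf x) = principal_uf x.
Proof. unfold tmin. apply (ext_left _ _ _ (fun y => y = x) (fun _ y => y = x)); try reflexivity.
  intros; subst; apply (xmin_l lt), le_refl. Qed.
Lemma tmax_pp x : tmax lt (principal_uf x) (principal_uf x) = principal_uf x.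
Proof. unfold tmax. apply (ext_left _ _ _ (fun y => y = x) (fun _ y => y = x)); try reflexivity.
  intros; subst; apply (xmax_r lt), le_refl. Qed.

End S2.

Section S3.
Context {X : Type} (lt : X -> X -> Prop) (Hl : strict_linear_order X lt).

Lemma supp_cases u :
  (exists x, u = principal_uf x /\ supp lt u = SPt x) \/
  (~ is_principal u /\ umem u (Iu lt u) /\ supp lt u = SLeft (Iu lt u)) \/
  (~ is_principal u /\ ~ umem u (Iu lt u) /\ umem u (Ju lt u) /\ supp lt u = SRight (Ju lt u)).
Proof.
  unfold supp. destruct (excluded_middle_informative (is_principal u)) as [H|H].
  - left. destruct (constructive_indefinite_description _ H) as [x Hx]; simpl. exists x; auto.
  - destruct (excluded_middle_informative (umem u (Iu lt u))); [right; left; auto|].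
    right; right. destruct (LR lt Hl u); tauto.
Qed.

Definition Tdesc (s : supp_t X) (I : X -> Prop) : Prop :=
  match s with
  | SPt x => I x
  | SLeft K => forall x, K x -> I x
  | SRight L => exists x, I x /\ L x
  end.

Definition good (s : supp_t X) : Prop :=
  match s with
  | SPt x => True
  | SLeft K => initial_seg lt K /\ forall x, K x -> exists y, K y /\ lt x y
  | SRight L => final_seg lt L /\ forall x, L x -> exists y, L y /\ lt y x
  end.

Lemma supp_T u I : initial_seg lt I -> (umem u I <-> Tdesc (supp lt u) I).
Proof.
  intro HI. destruct (supp_cases u) as [[x [E Hs]]|[[NP [Hi Hs]]|[NP [Ni [Hj Hs]]]]];
    rewrite Hs; simpl.
  - subst u; simpl; tauto.
  - split.
    + intros H x Hx. apply Hx; auto.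
    + intro H. apply (u_up u _ _ H Hi).
  - split.
    + intro H. destruct (u_int_ne u _ _ H Hj) as [x Hx]; exists x; auto.
    + intros [x [Ix Jx]]. apply NNPP; intro N.
      apply (Jx (fun y => ~ I y)); auto. apply (compl_final lt I HI). apply u_not; auto.
Qed.

Lemma supp_good u : good (supp lt u).
Proof.
  destruct (supp_cases u) as [[x [E Hs]]|[[NP [Hi Hs]]|[NP [Ni [Hj Hs]]]]];
    rewrite Hs; simpl; auto.
  - split; [apply Iu_init|]. intros x Hx.
    pose proof (u_not _ _ (nonprinc_Iu lt Hl u x NP Hx)) as N.
    destruct (u_int_ne u _ _ Hi N) as [y [Iy Ny]]. exists y; split; auto.
    apply (not_le_lt lt Hl); auto.
  - split; [apply Ju_final|]. intros x Hx.
    pose proof (u_not _ _ (nonprinc_Ju lt Hl u x NP Hx)) as N.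
    destruct (u_int_ne u _ _ Hj N) as [y [Iy Ny]]. exists y; split; auto.
    apply (not_le_lt lt Hl); auto.
Qed.

Lemma order_lemma s t : good s -> good t ->
  (supp_lt lt s t <-> exists I, initial_seg lt I /\ Tdesc s I /\ ~ Tdesc t I).
Proof.
  pose proof (init_le lt Hl) as IL.
  destruct s as [x|K|L]; destruct t as [y|K'|L']; simpl; intros Gs Gt; split.
  - intro H. exists (fun z => le lt z x). split; auto. split; [apply le_refl|].
    intro H2. eapply (le_not_lt lt Hl); eauto.
  - intros [I [HI [Ix Ny]]]. eapply (init_lt_not lt Hl); eauto.
  - intro H. destruct Gt as [GK GM]. destruct (GM x H) as [y [Ky Hy]].
    exists (fun z => le lt z x). split; auto. split; [apply le_refl|].
    intro H2. apply (le_not_lt lt Hl y x); auto.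
  - intros [I [HI [Ix N]]]. destruct Gt as [GK GM].
    apply not_all_ex_not in N; destruct N as [z N]; apply imply_to_and in N; destruct N as [Kz Nz].
    apply (GK x z Kz). left. eapply (init_lt_not lt Hl); eauto.
  - intro H. destruct Gt as [GL GM]. exists (fun z => le lt z x). split; auto. split; [apply le_refl|].
    intros [z [Hz Lz]]. apply H. eapply GL; eauto.
  - intros [I [HI [Ix N]]] Lx. apply N; exists x; auto.
  - intro H. exists K. destruct Gs; split; auto.
  - intros [I [HI [H N]]] Kx. apply N; auto.
  - intros [Hsub [z [K'z Nz]]]. exists K. destruct Gs; repeat split; auto; intro H; apply Nz; auto.
  - intros [I [HI [H N]]]. destruct Gt as [GK' _].
    apply not_all_ex_not in N; destruct N as [y N]; apply imply_to_and in N; destruct N as [K'y Ny].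
    split.
    + intros z Kz. apply (GK' z y K'y). left. eapply (init_lt_not lt Hl); eauto.
    + exists y; split; auto.
  - intro H. exists K. destruct Gs; split; auto. split; auto. intros [z [Kz Lz]]; eapply H; eauto.
  - intros [I [HI [H N]]] z [Kz Lz]. apply N; exists z; auto.
  - intro H. destruct Gs as [GL GM]. destruct (GM y H) as [z [Lz Hz]].
    exists (fun w => le lt w z). split; auto. split; [exists z; split; auto; apply le_refl|].
    intro H2. apply (le_not_lt lt Hl y z); auto.
  - intros [I [HI [[z [Iz Lz]] N]]]. destruct Gs as [GL _]. apply (GL y z Lz). left.
    eapply (init_lt_not lt Hl); eauto.
  - intros [z [Kz Lz]]. destruct Gt as [GK GM]. destruct (GM z Kz) as [y [Ky Hy]].
    exists (fun w => le lt w z). split; auto. split; [exists z; split; auto; apply le_refl|].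
    intro H2. apply (le_not_lt lt Hl y z); auto.
  - intros [I [HI [[z [Iz Lz]] N]]]. destruct Gt as [GK _].
    apply not_all_ex_not in N; destruct N as [w N]; apply imply_to_and in N; destruct N as [Kw Nw].
    exists z; split; auto. apply (GK z w Kw). left. eapply (init_lt_not lt Hl); eauto.
  - intros [Hsub [x [Lx Nx]]]. exists (fun w => le lt w x). split; auto.
    split; [exists x; split; auto; apply le_refl|].
    intros [z [Hz L'z]]. apply Nx. destruct Gt as [GL' _]. eapply GL'; eauto.
  - intros [I [HI [[z [Iz Lz]] N]]]. destruct Gs as [GL _]. split.
    + intros w L'w. apply (GL w z Lz). left.
      apply (init_lt_not lt Hl I); [exact HI | exact Iz | intro Iw; apply N; exists w; auto].
    + exists z; split; auto. intro L'z; apply N; exists z; auto.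
Qed.

Lemma P_supp u v : supp_lt lt (supp lt u) (supp lt v) <->
  exists I, initial_seg lt I /\ umem u I /\ ~ umem v I.
Proof.
  rewrite order_lemma by apply supp_good.
  split; intros [I [HI [A B]]]; exists I; split; auto;
    rewrite !(supp_T _ I HI) in *; auto.
Qed.

Lemma supp_same u v : supp lt u = supp lt v -> lo lt u v /\ lo lt v u.
Proof.
  intro E; split; intros I HI H; apply (supp_T _ I HI); apply (supp_T _ I HI) in H;
    [rewrite E|rewrite <- E]; exact H.
Qed.

Lemma same_supp u v : lo lt u v -> lo lt v u -> supp lt u = supp lt v.
Proof.
  intros L1 L2.
  destruct (supp_cases u) as [[x [E Hs]]|Hu].
  - rewrite (same_principal lt Hl u v x L1 L2 E); auto.
  - assert (NPv : ~ is_principal v).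
    { intros [y Hy]. assert (u = v) by (apply (same_principal lt Hl v u y); auto).
      subst; destruct Hu as [[NP _]|[NP _]]; apply NP; exists y; auto. }
    assert (EI : Iu lt u = Iu lt v).
    { apply functional_extensionality; intro x; apply propositional_extensionality.
      unfold Iu; split; intros H I HI Hv; apply H; auto. }
    assert (EJ : Ju lt u = Ju lt v).
    { apply functional_extensionality; intro x; apply propositional_extensionality.
      unfold Ju; split; intros H J HJ Hv; apply H; auto;
      [rewrite (same_final lt u v J)|rewrite <- (same_final lt u v J)]; auto. }
    assert (EM : umem u (Iu lt u) <-> umem v (Iu lt v)).
    { rewrite <- EI. split; [apply L2|apply L1]; apply Iu_init. }
    destruct (supp_cases v) as [[y [E Hs]]|[[NP [Hi Hs]]|[NP [Ni [Hj Hs]]]]].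
    + exfalso; apply NPv; exists y; auto.
    + destruct Hu as [[_ [_ Hs']]|[_ [N _]]]; [rewrite Hs', Hs, EI; auto| tauto].
    + destruct Hu as [[_ [H _]]|[_ [_ [_ Hs']]]]; [tauto| rewrite Hs', Hs, EJ; auto].
Qed.

End S3.

Section S4.
Context {X : Type} (lt : X -> X -> Prop) (Hl : strict_linear_order X lt).

Lemma same_cases u v : lo lt u v -> lo lt v u ->
  (u = v /\ is_principal u) \/
  (tmin lt u v = u /\ tmin lt v u = v /\ tmax lt u v = v /\ tmax lt v u = u) \/
  (tmin lt u v = v /\ tmin lt v u = u /\ tmax lt u v = u /\ tmax lt v u = v).
Proof.
  intros L1 L2. pose proof (lo_refl lt u) as R.
  destruct (classic (is_principal u)) as [[x Hx]|NP].
  - left. split; [symmetry; eapply (same_principal lt Hl); eauto | exists x; auto].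
  - destruct (LR lt Hl u) as [H|H]; right; [left|right].
    + destruct (class_left lt Hl u u v NP H R R L2 L1) as [a b].
      destruct (class_left lt Hl u v u NP H L2 L1 R R) as [c d]. tauto.
    + destruct (class_right lt Hl u u v NP H R R L2 L1) as [a b].
      destruct (class_right lt Hl u v u NP H L2 L1 R R) as [c d]. tauto.
Qed.

Lemma idem u : is_principal u -> tmin lt u u = u /\ tmax lt u u = u.
Proof. intros [x Hx]; subst; split; [apply tmin_pp|apply tmax_pp]; auto. Qed.

Lemma tle_min u v : tle lt u v <-> (tmin lt u v = u \/ tmin lt v u = u).
Proof.
  rewrite (tle_lo lt Hl). split.
  - intro L. destruct (classic (lo lt v u)) as [L2|N].
    + destruct (same_cases u v L L2) as [[E P]|[H|H]]; [subst; left; apply (idem v P)|tauto|tauto].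
    + destruct (notlo lt _ _ N) as [I [HI [A B]]]. left; apply (sep lt Hl u v I); auto.
  - intros [H|H] I HI Hv; rewrite <- H; apply (tmin_init lt Hl); auto.
Qed.

Lemma tle_max u v : tle lt u v <-> (tmax lt u v = v \/ tmax lt v u = v).
Proof.
  rewrite (tle_lo lt Hl). split.
  - intro L. destruct (classic (lo lt v u)) as [L2|N].
    + destruct (same_cases u v L L2) as [[E P]|[H|H]]; [subst; left; apply (idem v P)|tauto|tauto].
    + destruct (notlo lt _ _ N) as [I [HI [A B]]]. left; apply (sep lt Hl u v I); auto.
  - intros [H|H] I HI Hv; rewrite <- H in Hv; apply (tmax_init lt Hl) in Hv; tauto; auto.
Qed.

Lemma notlo_min u v : ~ lo lt u v -> tmin lt u v = tmin lt v u /\ tmax lt u v = tmax lt v u.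
Proof.
  intro N. destruct (notlo lt _ _ N) as [I [HI [A B]]].
  destruct (sep lt Hl v u I HI A B) as [a [b [c d]]]. rewrite a, b, c, d; auto.
Qed.

Lemma tle_min2 u v : tle lt u v <-> (tmin lt u v = u \/ tmin lt u v <> tmin lt v u).
Proof.
  split.
  - intro T. apply tle_min in T. destruct (classic (tmin lt u v = u)); [left; auto|right].
    destruct T as [T|T]; [contradiction|]. rewrite T; auto.
  - intros [H|H]; [apply tle_min; auto|].
    rewrite (tle_lo lt Hl). apply NNPP; intro N. apply H; apply notlo_min; auto.
Qed.

Lemma tle_max2 u v : tle lt u v <-> (tmax lt u v = v \/ tmax lt u v <> tmax lt v u).
Proof.
  split.
  - intro T. apply tle_max in T. destruct (classic (tmax lt u v = v)); [left; auto|right].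
    destruct T as [T|T]; [contradiction|]. rewrite T; auto.
  - intros [H|H]; [apply tle_max; auto|].
    rewrite (tle_lo lt Hl). apply NNPP; intro N. apply H; apply notlo_min; auto.
Qed.

Lemma tequiv_same u v : tequiv lt u v <-> lo lt u v /\ lo lt v u.
Proof. unfold tequiv; rewrite !(tle_lo lt Hl); tauto. Qed.

Lemma tequiv_min u v : tequiv lt u v <-> (tmin lt u v <> tmin lt v u \/ u = v).
Proof.
  rewrite tequiv_same. split.
  - intros [L1 L2]. destruct (classic (u = v)) as [E|NE]; [right; auto|left].
    destruct (same_cases u v L1 L2) as [[E P]|[H|H]]; [contradiction| |];
      destruct H as [a [b _]]; rewrite a, b; auto.
  - intros [H|H]; [|subst; split; apply lo_refl].
    split; apply NNPP; intro N; apply H; destruct (notlo_min _ _ N); auto.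
Qed.

Lemma tequiv_max u v : tequiv lt u v <-> (tmax lt u v <> tmax lt v u \/ u = v).
Proof.
  rewrite tequiv_same. split.
  - intros [L1 L2]. destruct (classic (u = v)) as [E|NE]; [right; auto|left].
    destruct (same_cases u v L1 L2) as [[E P]|[H|H]]; [contradiction| |];
      destruct H as [_ [_ [a b]]]; rewrite a, b; auto.
  - intros [H|H]; [|subst; split; apply lo_refl].
    split; apply NNPP; intro N; apply H; destruct (notlo_min _ _ N); auto.
Qed.

Lemma relD_half u v : lo lt u v -> lo lt v u -> tmin lt (tmin lt u v) u = u.
Proof.
  intros L1 L2. destruct (same_cases u v L1 L2) as [[E P]|[H|H]].
  - subst. destruct (idem v P) as [a _]. rewrite !a; auto.
  - destruct H as [a _]. rewrite a. destruct (classic (is_principal u)) as [P|NP].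
    + apply (idem u P).
    + destruct (same_cases u u (lo_refl lt u) (lo_refl lt u)) as [[_ P]|[H|H]]; tauto.
  - destruct H as [a [b _]]. rewrite a, b; auto.
Qed.

Lemma min_cong u u' v v' : lo lt u u' -> lo lt v v' -> lo lt (tmin lt u v) (tmin lt u' v').
Proof. intros A B I HI H. apply (tmin_init lt Hl) in H; auto. apply (tmin_init lt Hl); auto.
  destruct H; [left; apply A|right; apply B]; auto. Qed.
Lemma max_cong u u' v v' : lo lt u u' -> lo lt v v' -> lo lt (tmax lt u v) (tmax lt u' v').
Proof. intros A B I HI H. apply (tmax_init lt Hl) in H; auto. apply (tmax_init lt Hl); auto.
  destruct H; split; [apply A|apply B]; auto. Qed.

Lemma supp_min u v : supp lt (tmin lt u v) = smin lt (supp lt u) (supp lt v).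
Proof.
  unfold smin. destruct (excluded_middle_informative _) as [H|H].
  - apply (P_supp lt Hl) in H. destruct H as [I [HI [A B]]].
    destruct (sep lt Hl u v I HI A B) as [a _]. rewrite a; auto.
  - assert (L : lo lt v u).
    { intros I HI Hu. apply NNPP; intro N. apply H. apply (P_supp lt Hl). exists I; auto. }
    apply (same_supp lt Hl).
    + intros I HI Hv. apply (tmin_init lt Hl); auto.
    + intros I HI Hm. apply (tmin_init lt Hl) in Hm; auto. destruct Hm; auto.
Qed.

Lemma supp_max u v : supp lt (tmax lt u v) = smax lt (supp lt u) (supp lt v).
Proof.
  unfold smax. destruct (excluded_middle_informative _) as [H|H].
  - apply (P_supp lt Hl) in H. destruct H as [I [HI [A B]]].
    destruct (sep lt Hl u v I HI A B) as [_ [_ [a _]]]. rewrite a; auto.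
  - assert (L : lo lt v u).
    { intros I HI Hu. apply NNPP; intro N. apply H. apply (P_supp lt Hl). exists I; auto. }
    apply (same_supp lt Hl).
    + intros I HI Hu. apply (tmax_init lt Hl); auto.
    + intros I HI Hm. apply (tmax_init lt Hl) in Hm; tauto.
Qed.

End S4.

Theorem corollary6 (X : Type) (lt : X -> X -> Prop) (Hlin : strict_linear_order X lt) :
  (* (1) *)
  (forall u v : ultra X,
     (tle lt u v <-> (tmin lt u v = u \/ tmin lt v u = u)) /\
     (tle lt u v <-> (tmin lt u v = u \/ tmin lt u v <> tmin lt v u)) /\
     (tle lt u v <-> (tmax lt u v = v \/ tmax lt v u = v)) /\
     (tle lt u v <-> (tmax lt u v = v \/ tmax lt u v <> tmax lt v u)) /\
     (tequiv lt u v <-> (tmin lt u v <> tmin lt v u \/ u = v)) /\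
     (tequiv lt u v <-> (tmax lt u v <> tmax lt v u \/ u = v)))
  /\
  (* (2) ≡ is a congruence of (βX, max~, min~) and coincides with D *)
  ((forall u : ultra X, tequiv lt u u) /\
   (forall u v : ultra X, tequiv lt u v -> tequiv lt v u) /\
   (forall u v w : ultra X, tequiv lt u v -> tequiv lt v w -> tequiv lt u w) /\
   (forall u u' v v' : ultra X, tequiv lt u u' -> tequiv lt v v' ->
      tequiv lt (tmin lt u v) (tmin lt u' v') /\
      tequiv lt (tmax lt u v) (tmax lt u' v')) /\
   (forall u v : ultra X, tequiv lt u v <-> relD lt u v))
  /\
  (* (3) [u] |-> supp u is an isomorphism βX/≡ -> (s(X), min, max) *)
  ((forall u v : ultra X, tequiv lt u v <-> supp lt u = supp lt v) /\
   (forall s : supp_t X, in_sX lt s -> exists u : ultra X, supp lt u = s) /\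
   (forall u v : ultra X, supp lt (tmin lt u v) = smin lt (supp lt u) (supp lt v)) /\
   (forall u v : ultra X, supp lt (tmax lt u v) = smax lt (supp lt u) (supp lt v)))
  /\
  (* (4) the ≡-classes *)
  (forall u : ultra X,
     (is_principal u -> forall v : ultra X, tequiv lt v u -> v = u) /\
     (~ is_principal u -> umem u (Iu lt u) ->
        forall v w : ultra X, tequiv lt v u -> tequiv lt w u ->
          tmin lt v w = v /\ tmax lt v w = w) /\
     (~ is_principal u -> umem u (Ju lt u) ->
        forall v w : ultra X, tequiv lt v u -> tequiv lt w u ->
          tmin lt v w = w /\ tmax lt v w = v)).
Proof.
  pose proof (tequiv_same lt Hlin) as TS.
  split; [|split; [|split]].
  - intros u v. split; [apply tle_min|split; [apply tle_min2|split; [apply tle_max|split; [apply tle_max2|split; [apply tequiv_min|apply tequiv_max]]]]]; auto.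
  - split; [|split; [|split; [|split]]].
    + intro u; apply TS; split; apply lo_refl.
    + intros u v H; apply TS; apply TS in H; tauto.
    + intros u v w H1 H2; apply TS; apply TS in H1; apply TS in H2.
      destruct H1, H2; split; eapply lo_trans; eauto.
    + intros u u' v v' H1 H2; apply TS in H1; apply TS in H2; destruct H1, H2.
      split; apply TS; split; first [apply min_cong | apply max_cong]; auto.
    + intros u v. rewrite TS. unfold relD. split.
      * intros [L1 L2]. split; apply relD_half; auto.
      * intros [H1 H2]. split; intros I HI H.
        -- rewrite <- H1. apply (tmin_init lt Hlin); auto. left. apply (tmin_init lt Hlin); auto.
        -- rewrite <- H2. apply (tmin_init lt Hlin); auto. left. apply (tmin_init lt Hlin); auto.
  - split; [|split; [|split]].
    + intros u v. rewrite TS. split.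
      * intros [L1 L2]; apply (same_supp lt Hlin); auto.
      * apply (supp_same lt Hlin).
    + intros s H; exact H.
    + apply supp_min; auto.
    + apply supp_max; auto.
  - intro u. split; [|split].
    + intros [x Hx] v H. apply TS in H. destruct H. eapply (same_principal lt Hlin); eauto.
    + intros NP HI v w H1 H2. apply TS in H1; apply TS in H2. destruct H1, H2.
      apply (class_left lt Hlin u); auto.
    + intros NP HJ v w H1 H2. apply TS in H1; apply TS in H2. destruct H1, H2.
      apply (class_right lt Hlin u); auto.
Qed.
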